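(* Let $q$ be a prime power, $k,b,t$ positive integers and $f:\mathbb{F}_q^k\to\mathrm{Im}(f)$ a function. For any subset $\{\boldsymbol{x}_1,\ldots,\boldsymbol{x}_M\}\subseteq\mathbb{F}_q^k$, \[ r_b^f(k,t)\ge N_b\big(\boldsymbol{B}_f^{(1)}(t,\boldsymbol{x}_1,\ldots,\boldsymbol{x}_M)\big). \] Moreover, if $|\mathrm{Im}(f)|\ge 2$ and $t>b-1$, then $r_b^f(k,t)\ge 2(t-b+1)$.
   Context: For $\boldsymbol{z}=(z_0,\ldots,z_{n-1})\in\mathbb{F}_q^n$, the $b$-symbol distance of $\boldsymbol{z},\boldsymbol{w}\in\mathbb{F}_q^n$ is $d_b(\boldsymbol{z},\boldsymbol{w})=$ the number of $i\in\{0,\ldots,n-1\}$ with $(z_i,\ldots,z_{i+b-1})\neq(w_i,\ldots,w_{i+b-1})$ (indices mod $n$). A systematic encoding $\mathrm{Enc}(\boldsymbol{x})=(\boldsymbol{x},p(\boldsymbol{x}))\in\mathbb{F}_q^{k+r}$ is a function-correcting $b$-symbol code for $f$ if $d_b(\mathrm{Enc}(\boldsymbol{x}_1),\mathrm{Enc}(\boldsymbol{x}_2))\ge 2t+1$ whenever $f(\boldsymbol{x}_1)\ne f(\boldsymbol{x}_2)$; $r_b^f(k,t)$ is the smallest $r$ for which one exists. For an $M\times M$ nonnegative integer matrix $\boldsymbol{B}$, $N_b(\boldsymbol{B})$ is the smallest $r$ such that there exist $\boldsymbol{p}_1,\ldots,\boldsymbol{p}_M\in\mathbb{F}_q^r$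 (in some ordering) with $d_b(\boldsymbol{p}_i,\boldsymbol{p}_j)\ge[\boldsymbol{B}]_{ij}$ for all $i,j$. $[\boldsymbol{B}_f^{(1)}(t,\boldsymbol{x}_1,\ldots,\boldsymbol{x}_M)]_{ij}=\max\{2t-b+2-d_b(\boldsymbol{x}_i,\boldsymbol{x}_j),0\}$ if $f(\boldsymbol{x}_i)\ne f(\boldsymbol{x}_j)$ and $0$ otherwise. *)

(* Defs.v *)
From Stdlib Require Import ClassicalEpsilon.
From mathcomp Require Import all_boot all_order all_algebra.
Set Implicit Arguments. Unset Strict Implicit. Unset Printing Implicit Defensive.
Import GRing.Theory.
Local Open Scope ring_scope.

(* Least natural number satisfying P (if some natural number satisfies P,
   this is the genuine minimum; otherwise an unspecified value). *)
Definition least (P : nat -> Prop) : nat :=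
  epsilon (inhabits 0%N) (fun n => P n /\ forall m, P m -> (n <= m)%N).

Definition cyc (F : finFieldType) (n : nat) (z : n.-tuple F) (m : nat) : F :=
  nth 0 z (m %% n).

Definition dsym (F : finFieldType) (b n : nat) (z w : n.-tuple F) : nat :=
  #|[set i : 'I_n | [exists j : 'I_b, cyc z (i + j) != cyc w (i + j)]]|.

(* Existence of a systematic function-correcting b-symbol code with
   redundancy r:  Enc(x) = (x, p x). *)
Definition fcbsc_exists (F : finFieldType) (T : eqType) (k : nat)
  (f : k.-tuple F -> T) (b t r : nat) : Prop :=
  exists p : k.-tuple F -> r.-tuple F,
    forall x1 x2, f x1 != f x2 ->
      (2 * t + 1 <= dsym b (cat_tuple x1 (p x1)) (cat_tuple x2 (p x2)))%N.

Definition rbf (F : finFieldType) (T : eqType) (k : nat)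
  (f : k.-tuple F -> T) (b t : nat) : nat :=
  least (fcbsc_exists f b t).

Definition Nb (F : finFieldType) (b M : nat) (B : 'M[nat]_M) : nat :=
  least (fun r => exists p : 'I_M -> r.-tuple F,
           forall i j, (B i j <= dsym b (p i) (p j))%N).

(* B_f^(1)(t, x_1, ..., x_M); the entry max{2t-b+2-d_b, 0} is computed
   with truncated nat subtraction, which coincides with it. *)
Definition Bf1 (F : finFieldType) (T : eqType) (k : nat)
  (f : k.-tuple F -> T) (b t M : nat) (x : 'I_M -> k.-tuple F) : 'M[nat]_M :=
  \matrix_(i < M, j < M)
    (if f (x i) != f (x j) then (2 * t + 2 - b - dsym b (x i) (x j))%N else 0%N).

(* Main.v *)
Require Import Defs.
From Stdlib Require Import Classical.
From mathcomp Require Import all_boot all_order all_algebra zify.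
Set Implicit Arguments. Unset Strict Implicit. Unset Printing Implicit Defensive.
Import GRing.Theory.

Lemma card_ord_pred m (P : pred nat) :
  #|[set y : 'I_m | P y]| = \sum_(0 <= y < m) P y.
Proof.
rewrite -sum1_card big_mkcond /= big_mkord.
by apply: eq_bigr => i _; rewrite inE; case: (P i).
Qed.

Lemma cyc_cat_lt (F : finFieldType) k r (x : k.-tuple F) (p : r.-tuple F) m :
  m %% (k + r) < k -> cyc (cat_tuple x p) m = nth 0%R x (m %% (k + r)).
Proof. by move=> H; rewrite /cyc /= nth_cat size_tuple H. Qed.

Lemma cyc_cat_ge (F : finFieldType) k r (x : k.-tuple F) (p : r.-tuple F) m :
  k <= m %% (k + r) -> cyc (cat_tuple x p) m = nth 0%R p (m %% (k + r) - k).
Proof. by move=> H; rewrite /cyc /= nth_cat size_tuple ltnNge H. Qed.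

Definition xdw (F : finFieldType) b n (z w : n.-tuple F) (y : nat) :=
  [exists j : 'I_b, cyc z (y + j) != cyc w (y + j)].

Definition pdE (F : finFieldType) k r b (e1 e2 : (k + r).-tuple F) y :=
  [exists j : 'I_b, (k <= (y + j) %% (k + r)) && (cyc e1 (y + j) != cyc e2 (y + j))].

Definition phin k r b (pe : bool) i :=
  if i < k then (if i + b <= k then i else k + r + (k - 1 - i))
  else if pe then i else if r <= i then i - r else k + r + (k + r - 1 - i).

Lemma cls (F : finFieldType) k r b (x1 x2 : k.-tuple F) (p1 p2 : r.-tuple F) i :
  i < k + r -> xdw b (cat_tuple x1 p1) (cat_tuple x2 p2) i ->
  let v := phin k r b (pdE b (cat_tuple x1 p1) (cat_tuple x2 p2) i) i in
  [/\ i < k, i + b <= k, v = i & xdw b x1 x2 i] \/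
      [/\ i < k, k < i + b & v = k + r + (k - 1 - i)] \/
      [/\ k <= i, v = i & xdw b p1 p2 (i - k)] \/
      [/\ k <= i, k + r < i + b, r <= i, v = i - r & xdw b x1 x2 (i - r)] \/
      [/\ k <= i, k + r < i + b, i < r & v = k + r + (k + r - 1 - i)].
Proof.
rewrite /xdw /pdE; move=> Hi /existsP [j Hj].
have n0 : 0 < k + r by lia.
rewrite /phin.
case: (ltnP i k) => Hik.
  case: (leqP (i + b) k) => Hb.
    left; split => //.
    apply/existsP; exists j.
    have jb := ltn_ord j.
    have e1 : (i + j) %% (k + r) = i + j by apply: modn_small; lia.
    have e2 : (i + j) %% k = i + j by apply: modn_small; lia.
    move: Hj; rewrite !cyc_cat_lt e1 //; try lia.
    by rewrite /cyc e2.
  by right; left; split.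
case: ifP => HpE.
  right; right; left; split => //.
  move: HpE => /existsP [j0 /andP [Hm Hd]].
  set m' := (i + j0) %% (k + r) in Hm Hd.
  move: Hd; rewrite !cyc_cat_ge // -/m' => Hd.
  set q := (i + j0) %/ (k + r).
  have E : i + j0 = q * k + q * r + m' by rewrite /m' /q {1}(divn_eq (i + j0) (k + r)) mulnDr.
  have Hm' : m' < k + r by rewrite /m' ltn_pmod.
  have Hqk : q * k <= j0.
    case: (posnP q) => [->|q0]; first by rewrite mul0n.
    have : r <= q * r by rewrite leq_pmull.
    lia.
  have jb := ltn_ord j0.
  have Hjb : j0 - q * k < b by lia.
  apply/existsP; exists (Ordinal Hjb) => /=.
  have -> : i - k + (j0 - q * k) = q * r + (m' - k) by lia.
  by rewrite /cyc modnMDl modn_small //; lia.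
have Hs : (i + j) %% (k + r) < k.
  rewrite ltnNge; apply/negP => Hge.
  move/negbT/negP: HpE; apply; apply/existsP; exists j; by rewrite Hge.
set s := (i + j) %% (k + r) in Hs.
have jb := ltn_ord j.
have Hn : k + r < i + b.
  rewrite ltnNge; apply/negP => Hle.
  have : (i + j) %% (k + r) = i + j by apply: modn_small; lia.
  rewrite -/s; lia.
case: (leqP r i) => Hri.
  right; right; right; left; split => //.
  move: Hj; rewrite !cyc_cat_lt // -/s => Hd.
  set q := (i + j) %/ (k + r).
  have E : i + j = q * k + q * r + s by rewrite /s /q {1}(divn_eq (i + j) (k + r)) mulnDr.
  have q0 : 0 < q.
    rewrite lt0n; apply/negP => /eqP q0.
    move: E; rewrite q0 !mul0n; lia.
  have Hqk : k <= q * k by rewrite leq_pmull.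
  have Hqr : r <= q * r by rewrite leq_pmull.
  have Hjb : j - (q * r - r) < b by lia.
  apply/existsP; exists (Ordinal Hjb) => /=.
  have -> : i - r + (j - (q * r - r)) = q * k + s by lia.
  by rewrite /cyc modnMDl modn_small.
by right; right; right; right; split.
Qed.

Lemma key (F : finFieldType) k r b (x1 x2 : k.-tuple F) (p1 p2 : r.-tuple F) :
  0 < b ->
  dsym b (cat_tuple x1 p1) (cat_tuple x2 p2) <= dsym b x1 x2 + dsym b p1 p2 + b.-1.
Proof.
move=> b0.
set e1 := cat_tuple x1 p1; set e2 := cat_tuple x2 p2.
set N := k + r + b.-1.
pose De := [set i : 'I_(k + r) | xdw b e1 e2 i].
pose phi (i : 'I_(k + r)) : 'I_N.+1 := inord (phin k r b (pdE b e1 e2 i) i).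
pose Tp (y : nat) : bool :=
  if y < k then xdw b x1 x2 y else if y < k + r then xdw b p1 p2 (y - k) else y < N.
pose T := [set y : 'I_N.+1 | Tp y].
have cardT : #|T| = dsym b x1 x2 + dsym b p1 p2 + b.-1.
  rewrite /T card_ord_pred.
  rewrite (@big_cat_nat _ _ _ k) /=; try (rewrite /N; lia).
  rewrite (@big_cat_nat _ _ _ (k + r) k) /=; try (rewrite /N; lia).
  rewrite (@big_cat_nat _ _ _ N (k + r)) /=; try (rewrite /N; lia).
  rewrite big_nat1 /Tp ltnn ifF; last by rewrite /N; apply/negbTE; rewrite -leqNgt; lia.
  rewrite ifF; last by apply/negbTE; rewrite -leqNgt /N; lia.
  rewrite addn0 -!addnA; congr (_ + _).
    rewrite /dsym (card_ord_pred k (xdw b x1 x2)).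
    by apply: eq_big_nat => i /andP [_ ->].
  congr (_ + _).
    rewrite /dsym (card_ord_pred r (xdw b p1 p2)).
    rewrite -{1}(add0n k) big_addn addKn.
    apply: eq_big_nat => i /andP [_ Hi].
    rewrite ifF; last by apply/negbTE; rewrite -leqNgt; lia.
    by rewrite ifT ?addnK //; lia.
  have -> : b.-1 = \sum_(k + r <= i < N) 1 by rewrite sum_nat_const_nat muln1 /N addKn.
  apply: eq_big_nat => i /andP [H1 H2].
  rewrite ifF; last by apply/negbTE; rewrite -leqNgt; lia.
  rewrite ifF; last by apply/negbTE; rewrite -leqNgt; lia.
  by rewrite H2.
have Hbd : forall i : 'I_(k + r), i \in De -> phin k r b (pdE b e1 e2 i) i < N.+1.
  move=> i; rewrite inE => Hi.
  have Hi' := ltn_ord i.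
  have := cls (ltn_ord i) Hi; rewrite /N.
  case=> [[? ? -> ?]|[[? ? ->]|[[? -> ?]|[[? ? ? -> ?]|[? ? ? ->]]]]]; lia.
have -> : dsym b e1 e2 = #|De| by [].
rewrite -cardT -(@card_in_imset _ _ phi De).
  apply: subset_leq_card; apply/subsetP => _ /imsetP [i Hi ->].
  rewrite inE /phi inordK; last exact: Hbd.
  move: Hi; rewrite inE => Hi.
  have Hi' := ltn_ord i.
  have := cls (ltn_ord i) Hi; rewrite /Tp /N.
  case=> [[? ? -> ?]|[[? ? ->]|[[? -> ?]|[[? ? ? -> ?]|[? ? ? ->]]]]].
  - by rewrite ifT.
  - rewrite ifF; last by apply/negbTE; rewrite -leqNgt; lia.
    rewrite ifF; last by apply/negbTE; rewrite -leqNgt; lia.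
    lia.
  - rewrite ifF; last by apply/negbTE; rewrite -leqNgt; lia.
    by rewrite ifT.
  - by rewrite ifT //; lia.
  - rewrite ifF; last by apply/negbTE; rewrite -leqNgt; lia.
    rewrite ifF; last by apply/negbTE; rewrite -leqNgt; lia.
    lia.
move=> i1 i2 H1 H2 /(congr1 (@nat_of_ord _)); rewrite /phi !inordK; try exact: Hbd.
move=> E; apply: val_inj => /=; move: E.
move: H1 H2; rewrite !inE => H1 H2.
have B1 := ltn_ord i1; have B2 := ltn_ord i2.
have := cls (ltn_ord i1) H1; have := cls (ltn_ord i2) H2.
case=> [[? ? -> ?]|[[? ? ->]|[[? -> ?]|[[? ? ? -> ?]|[? ? ? ->]]]]];
case=> [[? ? -> ?]|[[? ? ->]|[[? -> ?]|[[? ? ? -> ?]|[? ? ? ->]]]]]; lia.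
Qed.

Lemma ex_least (P : nat -> Prop) n : P n -> exists m, P m /\ forall l, P l -> m <= l.
Proof.
elim/ltn_ind: n => n IH Pn.
case: (classic (exists m, m < n /\ P m)) => [[m [lt Pm]]|H].
  exact: IH m lt Pm.
exists n; split => // l Pl; rewrite leqNgt; apply/negP => lt; apply: H; by exists l.
Qed.

Lemma leastP (P : nat -> Prop) : (exists n, P n) ->
  P (least P) /\ forall m, P m -> least P <= m.
Proof.
case=> n Pn; rewrite /least.
apply: (ClassicalEpsilon.epsilon_spec (inhabits 0) (fun n => P n /\ forall m, P m -> n <= m)).
exact: ex_least Pn.
Qed.

Definition mktup (F : finFieldType) n (g : nat -> F) : n.-tuple F :=
  @Tuple n F (mkseq g n) (introT eqP (size_mkseq g n)).

Lemma nth_mktup (F : finFieldType) n (g : nat -> F) m : m < n ->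
  nth 0%R (mktup n g) m = g m.
Proof. by move=> H; rewrite /= nth_mkseq. Qed.

Lemma tuple_neq (F : finFieldType) k (x1 x2 : k.-tuple F) : x1 != x2 ->
  exists2 s, s < k & nth 0%R x1 s != nth 0%R x2 s.
Proof.
move=> H; case: (classic (exists2 s, s < k & nth 0%R x1 s != nth 0%R x2 s)) => // Hn.
move/negP: H; case; apply/eqP/val_inj/(@eq_from_nth _ 0%R); first by rewrite !size_tuple.
move=> i; rewrite size_tuple => Hi.
case: (eqVneq (nth 0%R x1 i) (nth 0%R x2 i)) => // Hne.
by case: Hn; exists i.
Qed.

Lemma enc_rep (F : finFieldType) k N (x : k.-tuple F) m : m < k + N * k ->
  cyc (cat_tuple x (mktup (N * k) (fun i => nth 0%R x (i %% k)))) m = nth 0%R x (m %% k).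
Proof.
move=> Hm; rewrite /cyc modn_small // nth_cat size_tuple.
case: ltnP => H; first by rewrite modn_small.
rewrite nth_mktup; last by lia.
by rewrite -{2}(subnK H) modnDr.
Qed.

Lemma code_exists (F : finFieldType) (T : eqType) k (f : k.-tuple F -> T) b t :
  0 < b -> 0 < k -> exists r, fcbsc_exists f b t r.
Proof.
move=> b0 k0.
set N := 2 * t + 1.
exists (N * k).
exists (fun x => mktup (N * k) (fun i => nth 0%R x (i %% k))) => x1 x2 Hf.
have Hx : x1 != x2 by apply: contraNneq Hf => ->.
have [s Hs Hd] := tuple_neq Hx.
have HB : forall c : 'I_N, c * k + s < k + N * k.
  move=> c; have : c.+1 * k <= N * k by rewrite leq_mul2r ltn_ord orbT.
  rewrite mulSn; lia.
pose g (c : 'I_N) : 'I_(k + N * k) := Ordinal (HB c).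
have ginj : injective g.
  move=> c1 c2 /(congr1 (@nat_of_ord _)) /= /eqP.
  rewrite eqn_add2r eqn_pmul2r // => /eqP H; exact: val_inj.
rewrite /dsym.
apply: leq_trans (_ : #|[set g c | c in 'I_N]| <= _).
  by rewrite card_imset // card_ord.
apply: subset_leq_card; apply/subsetP => _ /imsetP [c _ ->]; rewrite inE.
apply/existsP; exists (Ordinal b0) => /=; rewrite addn0.
rewrite !enc_rep ?HB //.
by rewrite modnMDl modn_small.
Qed.

Lemma hybrid (F : finFieldType) (T : eqType) k (f : k.-tuple F -> T) x1 x2 :
  f x1 != f x2 -> exists y1 y2 : k.-tuple F, f y1 != f y2 /\
    exists2 c, c < k & forall m, m != c -> nth 0%R y1 m = nth 0%R y2 m.
Proof.
move=> Hf.
pose y c := mktup k (fun i => if i < c then nth 0%R x2 i else nth 0%R x1 i).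
have y0 : y 0 = x1.
  apply/val_inj/(@eq_from_nth _ 0%R); first by rewrite !size_tuple.
  by move=> i; rewrite size_tuple => Hi; rewrite nth_mktup.
have yk : y k = x2.
  apply/val_inj/(@eq_from_nth _ 0%R); first by rewrite !size_tuple.
  by move=> i; rewrite size_tuple => Hi; rewrite nth_mktup // Hi.
case: (classic (exists2 c, c < k & f (y c) != f (y c.+1))) => [[c Hc Hne]|Hn].
  exists (y c), (y c.+1); split => //; exists c => // m Hm.
  case: (ltnP m k) => Hmk.
    have E : (m < c.+1) = (m < c) by rewrite ltnS leq_eqVlt (negbTE Hm).
    by rewrite !nth_mktup // E.
  by rewrite !nth_default ?size_tuple.
have H : forall c, c <= k -> f (y c) = f (y 0).
  elim=> // c IH Hc; rewrite -IH; last by lia.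
  case: (eqVneq (f (y c.+1)) (f (y c))) => // H.
  by case: Hn; exists c => //; rewrite eq_sym.
move: (H k (leqnn k)); rewrite y0 yk => E.
by rewrite E eqxx in Hf.
Qed.

Lemma dsym_adj (F : finFieldType) k b (y1 y2 : k.-tuple F) c : 0 < k -> c < k ->
  (forall m, m != c -> nth 0%R y1 m = nth 0%R y2 m) -> dsym b y1 y2 <= b.
Proof.
move=> k0 Hc Heq.
pose h (j : 'I_b) : 'I_k := Ordinal (ltn_pmod (c + (k + b) * k - j) k0).
apply: leq_trans (_ : #|[set h j | j in 'I_b]| <= _); last first.
  by rewrite (leq_trans (leq_imset_card _ _)) // card_ord.
apply: subset_leq_card; apply/subsetP => i; rewrite inE => /existsP [j Hj].
have Hm : (i + j) %% k = c.
  case: (eqVneq ((i + j) %% k) c) => // H.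
  by move: Hj; rewrite /cyc Heq // eqxx.
apply/imsetP; exists j => //; apply: val_inj => /=.
set q := (i + j) %/ k.
have E : i + j = q * k + c by rewrite -Hm /q {1}(divn_eq (i + j) k).
have jb := ltn_ord j; have ik := ltn_ord i.
have Hq1 : q <= q * k by rewrite leq_pmulr.
have Hq : q <= k + b by lia.
have : q * k <= (k + b) * k by rewrite leq_mul2r Hq orbT.
move=> Hqk.
have -> : c + (k + b) * k - j = ((k + b) - q) * k + i by rewrite mulnBl; lia.
by rewrite modnMDl modn_small.
Qed.

Theorem corollary3p3 (F : finFieldType) (k b t : nat) (T : eqType)
  (f : k.-tuple F -> T) :
  (0 < k)%N -> (0 < b)%N -> (0 < t)%N ->
  (forall (M : nat) (x : 'I_M -> k.-tuple F), injective x ->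
     (Nb F b (Bf1 f b t x) <= rbf f b t)%N)
  /\
  ((exists x1 x2 : k.-tuple F, f x1 != f x2) -> (b - 1 < t)%N ->
     (2 * (t - b + 1) <= rbf f b t)%N).
Proof.
move=> k0 b0 t0.
have [r Hr] := code_exists f t b0 k0.
have [[p Hp] _] := leastP (ex_intro _ r Hr).
rewrite /rbf.
split.
  move=> M x _.
  have HP : exists p' : 'I_M -> (least (fcbsc_exists f b t)).-tuple F,
      forall i j, Bf1 f b t x i j <= dsym b (p' i) (p' j).
    exists (fun i => p (x i)) => i j; rewrite mxE; case: ifP => // H.
    have := Hp _ _ H; have := key (x i) (x j) (p (x i)) (p (x j)) b0; move=> A B.
    have K : 2 * t + 1 <= dsym b (x i) (x j) + dsym b (p (x i)) (p (x j)) + (b - 1).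
      by rewrite subn1; exact: leq_trans B A.
    move: K; move: (dsym b (x i) (x j)) (dsym b (p (x i)) (p (x j))) => d1 d2; lia.
  rewrite /Nb; exact: (proj2 (leastP (ex_intro _ _ HP))) _ HP.
move=> [x1 [x2 Hf]] Hbt.
have [y1 [y2 [Hy [c Hc Heq]]]] := hybrid Hf.
have := Hp _ _ Hy; have := key y1 y2 (p y1) (p y2) b0.
have := dsym_adj b k0 Hc Heq.
have : dsym b (p y1) (p y2) <= least (fcbsc_exists f b t).
  by rewrite /dsym (leq_trans (max_card _)) // card_ord.
lia.
Qed.
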